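(* Fix a policy $\pi$ and $0 \le \eta < 1$, and a random field $Z_0$. Define $Z_{t+1} = \mathcal{T}^{\pi,\eta} Z_t$ and $Z^0_{t+1} = \mathcal{T}^{\pi} Z^0_t$ for $t \ge 0$, with $Z^0_0 = Z_0$. Then for all $s\in\mathcal{S}$, $a\in\mathcal{A}$ and $t \ge 0$, $\mathbb{E}_z Z_t(s,a) \le \mathbb{E}_z Z^0_t(s,a)$.
   Context: Setting: a Markov decision process with state space $\mathcal{S}$, action space $\mathcal{A}$, kernel $p_{\text{env}}(\cdot\mid s,a)$ giving a joint law of reward $r$ and next state $s'$, stochastic policy $\pi(\cdot\mid s)$, discount $\gamma\in[0,1)$. A random field $Z$ assigns to each $(s,a)$ an integrable real random variable $Z(s,a)$ (only its law matters); $\mathbb{E}_z Z(s,a) = \mathbb{E}[Z(s,a)]$. Distributional Bellman operator: $[\mathcal{T}^\pi Z](s,a)$ has the law of $r+\gamma Z(s',a')$ with $(r,s')\sim p_{\text{env}}(\cdot\mid s,a)$, $a'\sim\pi(\cdot\mid s')$, $Z(s',a')$ drawn independently given $(r,s',a')$. For a real random variable $Z$ with continuous distribution function $F_Z$ and quantile function $F_Z^{-1}(u)=\inf\{z: F_Z(z)\ge u\}$, the truncation $\mathcal{S}^\eta(Z)$ has distribution function $F_Z(z)/(1-\eta)$ for $z \le F_Z^{-1}(1-\eta)$ and $1$ for $z > F_Z^{-1}(1-\eta)$; for a random field it is applied pointwise in $(s,a)$. The truncated operator is $\mathcal{T}^{\pi,\eta} = \mathcal{T}^\pi\circ\mathcal{S}^\eta$.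 Standing assumption: all random variables $Z_t(s,a)$ have continuous distribution functions so that the truncations are well defined. *)

(* Defs.v *)
From HB Require Import structures.
From mathcomp Require Import all_boot all_order all_algebra.
From mathcomp Require Import all_classical all_reals all_analysis.
Set Implicit Arguments. Unset Strict Implicit. Unset Printing Implicit Defensive.
Import Order.TTheory GRing.Theory Num.Theory.
Local Open Scope classical_set_scope.
Local Open Scope ring_scope.

Section Defs.
Context {R : realType}.

Definition distfun (mu : set R -> \bar R) (z : R) : \bar R := mu [set x | x <= z].

(* quantile F^{-1}(u) = inf {z | F(z) >= u}, in the extended reals
   (inf of the empty set is +oo) *)
Definition quantile (mu : set R -> \bar R) (u : R) : \bar R :=
  ereal_inf [set z%:E | z in [set z | (u%:E <= distfun mu z)%E]].

Definition is_truncation (eta : R) (mu nu : set R -> \bar R) : Prop :=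
  forall z : R, distfun nu z =
    if (z%:E <= quantile mu (1 - eta))%E
    then (distfun mu z * ((1 - eta)^-1)%:E)%E
    else 1%E.

(* distributional Bellman operator: [T^pi Y](s,a)(B) = P(r + gamma Y(s',a') in B)
   with (r,s') ~ penv(.|s,a), a' ~ pi(.|s'), Y(s',a') drawn independently *)
Definition bellman {dS dA : measure_display}
  {S : measurableType dS} {A : measurableType dA}
  (penv : R.-pker (S * A)%type ~> (R * S)%type) (pi : R.-pker S ~> A)
  (gamma : R) (Y : (S * A)%type -> set R -> \bar R)
  (sa : (S * A)%type) (B : set R) : \bar R :=
  (\int[penv sa]_rs \int[pi rs.2]_a' Y (rs.2, a') [set x | B (rs.1 + gamma * x)%R])%E.

Definition law_mean (mu : {measure set R -> \bar R}) : \bar R := (\int[mu]_x x%:E)%E.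

End Defs.

(* Main.v *)
Require Import Defs.
From HB Require Import structures.
From mathcomp Require Import all_boot all_order all_algebra.
From mathcomp Require Import all_classical all_reals all_analysis.
Import Order.TTheory GRing.Theory Num.Theory numFieldNormedType.Exports.
Local Open Scope classical_set_scope.
Local Open Scope ring_scope.

Lemma int_mono d (T : measurableType d) (R : realType) (mu : {measure set T -> \bar R})
  (D : set T) (f g : T -> \bar R) :
  (forall x, D x -> (0 <= f x)%E) -> (forall x, D x -> (f x <= g x)%E) ->
  (\int[mu]_(x in D) f x <= \int[mu]_(x in D) g x)%E.
Proof.
move=> f0 fg.
have g0 : forall x, D x -> (0 <= g x)%E by move=> x Dx; exact: le_trans (f0 x Dx) (fg x Dx).
have F0 : forall x, (0 <= (f \_ D) x)%E.
  by move=> x; rewrite patchE; case: ifPn => // /[!inE] /f0.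
have G0 : forall x, (0 <= (g \_ D) x)%E.
  by move=> x; rewrite patchE; case: ifPn => // /[!inE] /g0.
rewrite /integral.
have F0' : forall x, setT x -> (0 <= (f \_ D) x)%E by move=> x _; exact: F0.
have G0' : forall x, setT x -> (0 <= (g \_ D) x)%E by move=> x _; exact: G0.
apply: leeB.
  apply: ereal_sup_le => _ [h /= hf <-]; exists h => //= x.
  apply: le_trans (hf x) _.
  rewrite !funeposE /patch /=; case: ifPn => [/[!inE] Dx|_]; last by [].
  by rewrite (max_idPl (f0 x Dx)) (max_idPl (g0 x Dx)) fg.

apply: ereal_sup_le => _ [h /= hf <-]; exists h => //= x.
apply: le_trans (hf x) _.
rewrite !funenegE /patch /=; case: ifPn => [/[!inE] Dx|_]; last by [].
have N0 : forall y : \bar R, (0 <= y)%E -> (maxe (- y) 0 = 0)%E.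
  by move=> y y0; apply/max_idPr; rewrite leeNl oppe0.
by rewrite N0 ?N0 ?(f0 x Dx) ?(g0 x Dx).
Qed.

Section kp.
Context d (X : measurableType d) (R : realType) (k : R.-pker X ~> R) (x : X).
Definition kp : set R -> \bar R := k x.
HB.instance Definition _ := Measure.on kp.
HB.instance Definition _ := Measure_isProbability.Build _ _ _ kp (prob_kernel x).
End kp.
Arguments kp {d X R} k x.
Definition rid (R : realType) (x : R) := x.
HB.instance Definition _ (R : realType) := isMeasurableFun.Build _ _ R R (@rid R) (@measurable_id _ R setT).

Lemma cdf_kp d (X : measurableType d) (R : realType) (k : R.-pker X ~> R) (x : X) r :
  cdf (P := kp k x) (@rid R) r = k x [set y | y <= r].
Proof.
rewrite /cdf /distribution /pushforward /=.
congr (k x _); apply/funext => y /=; rewrite /rid in_itv /=.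
Qed.

Lemma mean_le d (X : measurableType d) (R : realType) (k1 k2 : R.-pker X ~> R) x1 x2 :
 (k1 x1).-integrable setT (fun x => x%:E) -> (k2 x2).-integrable setT (fun x => x%:E) ->
 (forall z : R, (k2 x2 [set x : R | (x <= z)%R] <= k1 x1 [set x : R | (x <= z)%R])%E) ->
 (law_mean (k1 x1) <= law_mean (k2 x2))%E.
Proof.
move=> i1 i2 dom.
have E1 : law_mean (k1 x1) = expectation (kp k1 x1) (@rid R) by rewrite expectation_def.
have E2 : law_mean (k2 x2) = expectation (kp k2 x2) (@rid R) by rewrite expectation_def.
rewrite E1 E2 !expectation_cdf_ccdf; last 2 first.
  by apply/Lfun1_integrable; exact: i2.
  by apply/Lfun1_integrable; exact: i1.
apply: leeB; apply: int_mono.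
- by move=> r _; exact: measure_ge0.
- move=> r _; rewrite !ccdf_1_cdf !cdf_kp; apply: leeB => //.
- by move=> r _; exact: measure_ge0.
- by move=> r _; rewrite !cdf_kp.
Qed.

Lemma meas_le (R : realType) (z : R) : measurable [set x : R | (x <= z)%R].
Proof.
rewrite (_ : [set x : R | (x <= z)%R] = `]-oo, z]%classic); first exact: measurable_itv.
by apply/funext => x /=; rewrite in_itv.
Qed.

Lemma shift_dom (R : realType) (mu nu : {measure set R -> \bar R})
  (hmu : mu setT = 1%E) (hnu : nu setT = 1%E) (g : R) (hg : 0 <= g) (r z : R) :
  (forall w : R, (mu [set x : R | (x <= w)%R] <= nu [set x : R | (x <= w)%R])%E) ->
  (mu [set x : R | (r + g * x <= z)%R] <= nu [set x : R | (r + g * x <= z)%R])%E.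
Proof.
move=> dom.
have [g0|gpos] := eqVneq g 0.
  subst g; have [rz|rz] := leP r z.
    rewrite (_ : [set x : R | _] = setT); first by rewrite hmu hnu.
    by apply/funext => x /=; rewrite mul0r addr0 rz; apply/propext.
  rewrite (_ : [set x : R | _] = set0); first by rewrite !measure0.
  by apply/funext => x /=; rewrite mul0r addr0 leNgt rz; apply/propext.
have gp : 0 < g by rewrite lt_neqAle eq_sym gpos hg.
rewrite (_ : [set x : R | _] = [set x : R | (x <= (z - r) / g)%R]); first exact: dom.
apply/funext => x /=; rewrite ler_pdivlMr // lerBrDl mulrC.
by [].
Qed.

Lemma trunc_dom (R : realType) d (X : measurableType d) (k : R.-pker X ~> R) x
   (nu : set R -> \bar R) (eta : R) (h0 : 0 <= eta) (h1 : eta < 1) :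
  is_truncation eta (k x) nu -> forall z, (distfun (k x) z <= distfun nu z)%E.
Proof.
move=> ht z; rewrite ht; case: ifPn => _.
  apply: lee_pemulr; first exact: measure_ge0.
  rewrite lee_fin invr_ge1 ?unitfE; first by rewrite gerBl.
  - by rewrite subr_eq0 eq_sym (lt_eqF h1).
  - by rewrite subr_gt0.
rewrite -(@prob_kernel _ _ _ _ _ k x); apply: le_measure; rewrite ?inE //; exact: meas_le.
Qed.

Theorem lemma10 (R : realType) (dS dA : measure_display)
  (S : measurableType dS) (A : measurableType dA)
  (penv : R.-pker (S * A)%type ~> (R * S)%type) (pi : R.-pker S ~> A)
  (gamma eta : R) (hgamma0 : 0 <= gamma) (hgamma1 : gamma < 1)
  (heta0 : 0 <= eta) (heta1 : eta < 1)
  (Z Y Z0 : nat -> R.-pker (S * A)%type ~> R)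
  (hintZ : forall t sa, (Z t sa).-integrable setT (fun x => x%:E))
  (hintZ0 : forall t sa, (Z0 t sa).-integrable setT (fun x => x%:E))
  (hcont : forall t sa, continuous (fun z : R => fine (distfun (Z t sa) z)))
  (hY : forall t sa, is_truncation eta (Z t sa) (Y t sa))
  (hZ : forall t sa B, measurable B ->
          Z t.+1 sa B = bellman penv pi gamma (fun x => Y t x) sa B)
  (hZ00 : forall sa B, measurable B -> Z0 0 sa B = Z 0 sa B)
  (hZ0 : forall t sa B, measurable B ->
          Z0 t.+1 sa B = bellman penv pi gamma (fun x => Z0 t x) sa B) :
  forall (s : S) (a : A) (t : nat), (law_mean (Z t (s, a)) <= law_mean (Z0 t (s, a)))%E.
Proof.
have dom : forall t sa z, (distfun (Z0 t sa) z <= distfun (Z t sa) z)%E.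
  elim=> [|t IH] sa z.
    by rewrite /distfun hZ00 //; exact: meas_le.
  rewrite /distfun hZ0 ?hZ; try exact: meas_le.
  rewrite /bellman; apply: int_mono.
    by move=> rs _; apply: integral_ge0 => a' _; exact: measure_ge0.
  move=> rs _; apply: int_mono.
    by move=> a' _; exact: measure_ge0.
  move=> a' _; apply: shift_dom => //.
  - exact: (@prob_kernel _ _ _ _ _ (Z0 t)).
  - exact: (@prob_kernel _ _ _ _ _ (Y t)).
  move=> w; apply: le_trans (IH _ w) _.
  exact: (@trunc_dom _ _ _ _ _ _ _ heta0 heta1 (hY t _) w).
move=> s a t; apply: mean_le => //; exact: dom.
Qed.
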